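(* Let $d,n\ge 1$, let $\mathcal{B}=\{x\in\mathbb{R}^d : x_i\in[\underline{x}_i,\overline{x}_i],\ i=1,\dots,d\}$ be a box with $\underline{x}_i\le \overline{x}_i$, and let $f:\mathbb{R}^d\to\mathbb{R}$ and $f_1,\dots,f_n:\mathbb{R}^d\to\mathbb{R}$ satisfy the assumptions stated in the context (in particular $f$ is a continuous piece-wise function defined in terms of $f_1,\dots,f_n$, each $f_j$ is differentiable on $\mathbb{R}^d$ and analytic along every line, and $\gamma>0$ bounds the second directional derivatives of the $f_j$). Let $\{x_s\}_{s\ge 0}$ be any sequence of iterates generated by the iteration described in the context (the multidimensional algorithm, run without termination). Then every limit point of $\{x_s\}$ is a global minimizer of the problem $f^*:=\min_{x\in\mathcal{B}} f(x)$.
   Context: Assumptions. $f_1,\dots,f_n:\mathbb{R}^d\to\mathbb{R}$ are differentiable on $\mathbb{R}^d$, and each $f_j$ is analytic along every line in $\mathbb{R}^d$, i.e. for every $x\in\mathbb{R}^d$ and $p\in\mathbb{R}^d$ the function $\alpha\mapsto f_j(x+\alpha p)$ is real analytic on $\mathbb{R}$. The function $f:\mathbb{R}^d\to\mathbb{R}$ is continuous and piece-wise defined in terms of $f_1,\dots,f_n$: for every $x,y\in\mathbb{R}^d$, the segment $\{x+t(y-x): t\in[0,1]\}$ can be split into finitely many subintervals $[t_\ell,t_{\ell+1}]$ of $[0,1]$ on each of which $t\mapsto f(x+t(y-x))$ coincides with $t\mapsto f_j(x+t(y-x))$ for some index $j\in\{1,\dots,n\}$ (depending on the subinterval). The scalar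 $\gamma>0$ satisfies $\left|\frac{d^2}{d\alpha^2} f_j(x+\alpha p)\right|\le\gamma$ for all $j=1,\dots,n$, all $x\in\mathbb{R}^d$, all unit vectors $p\in\mathbb{R}^d$ ($\|p\|_2=1$), and all $\alpha\in\mathbb{R}$. Quadratic models. For a point $y\in\mathbb{R}^d$ define $q_y(x):=f(y)+\min_{j=1,\dots,n}\{\nabla f_j(y)^T(x-y)\}-\frac{\gamma}{2}\|x-y\|_2^2$. The iteration (multidimensional algorithm). Pick an arbitrary $x_0\in\mathcal{B}$. For $s=0,1,2,\dots$: set $q_s:=q_{x_s}$, $\overline{q}_s(x):=\max_{k=0,\dots,s} q_k(x)$, choose $x_{s+1}$ to be a global minimizer of $\overline{q}_s$ over $\mathcal{B}$, and set the lower bound $l_{s+1}:=\overline{q}_s(x_{s+1})$ and the upper bound $u_{s+1}:=\min_{k=0,\dots,s+1} f(x_k)$. (In the paper the loop stops once $u_s-l_s\le\epsilon$ for a tolerance $\epsilon>0$; the theorem concerns the infinite sequence $\{x_s\}$ produced when the iteration is continued indefinitely.) *)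

(* Defs.v *)
From HB Require Import structures.
From mathcomp Require Import all_boot all_order all_algebra.
From mathcomp Require Import all_classical all_reals all_analysis.
Set Implicit Arguments. Unset Strict Implicit. Unset Printing Implicit Defensive.
Import Order.TTheory GRing.Theory Num.Theory.
Import numFieldNormedType.Exports.
Local Open Scope classical_set_scope.
Local Open Scope ring_scope.

Section Defs.
Variable R : realType.

Definition sqnorm2 (d : nat) (x : 'rV[R]_d) : R := \sum_(i < d) (x ord0 i) ^+ 2.

Definition box (d : nat) (lo hi : 'rV[R]_d) : set 'rV[R]_d :=
  [set x | forall i, lo ord0 i <= x ord0 i <= hi ord0 i].

Definition real_analytic (g : R -> R) : Prop :=
  forall a : R, exists r : R, 0 < r /\ exists c : nat -> R,
    forall t : R, `|t - a| < r ->
      (fun N : nat => \sum_(k < N) c k * (t - a) ^+ k) @ \oo --> g t.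

Definition minI (n : nat) (D : 'I_n -> R) : R :=
  \big[Num.min/head 0 [seq D j | j <- enum 'I_n]]_(j < n) D j.

Definition piecewise_of (d n : nat) (f : 'rV[R]_d -> R)
  (F : 'I_n -> 'rV[R]_d -> R) : Prop :=
  forall x y : 'rV[R]_d, exists (m : nat) (t : nat -> R) (J : nat -> 'I_n),
    [/\ t 0%N = 0, t m = 1,
        (forall l, (l < m)%N -> t l <= t l.+1) &
        (forall l, (l < m)%N -> forall s, t l <= s <= t l.+1 ->
            f (x + s *: (y - x)) = F (J l) (x + s *: (y - x)))].

(* quadratic model q_y(x) = f(y) + min_j grad f_j(y)^T (x-y) - gamma/2 ||x-y||^2 ;
   grad f_j(y)^T v is the (Frechet) differential 'd f_j y applied to v *)
Definition qmodel (d n : nat) (f : 'rV[R]_d -> R) (F : 'I_n -> 'rV[R]_d -> R)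
  (gamma : R) (y x : 'rV[R]_d) : R :=
  f y + minI (fun j => 'd (F j) y (x - y)) - gamma / 2 * sqnorm2 (x - y).

Definition qbar (d n : nat) (f : 'rV[R]_d -> R) (F : 'I_n -> 'rV[R]_d -> R)
  (gamma : R) (xs : nat -> 'rV[R]_d) (s : nat) (z : 'rV[R]_d) : R :=
  \big[Num.max/qmodel f F gamma (xs 0%N) z]_(k < s.+1) qmodel f F gamma (xs k) z.

End Defs.

(* Main.v *)
Require Import Defs.
From HB Require Import structures.
From mathcomp Require Import all_boot all_order all_algebra.
From mathcomp Require Import all_classical all_reals all_analysis.
From mathcomp Require Import ring lra.
Import Order.TTheory GRing.Theory Num.Theory.
Import numFieldNormedType.Exports.
Local Open Scope classical_set_scope.
Local Open Scope ring_scope.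
Lemma dlb (R : realType) (G : R -> R) (g : R) :
  (forall t, derivable G t 1) -> (forall t, derivable (derive1 G) t 1) ->
  (forall t, `|derive1 (derive1 G) t| <= g) ->
  forall t, 0 <= t -> - (g * t) <= derive1 G t - derive1 G 0.
Proof.
move=> dG ddG bd t t0.
have [c _ ->] := @MVT_segment R (derive1 G) (derive1 (derive1 G)) 0 t t0
  (fun x _ => ltac:(rewrite derive1E; exact: derivableP))
  (derivable_within_continuous (fun x _ => ddG x)).
rewrite subr0 -mulNr ler_wpM2r //.
by rewrite lerNl; apply: le_trans (bd c); rewrite -normrN ler_norm.
Qed.

Lemma dsq (R : realType) (x : R) : is_derive x (1:R) (fun t : R => t * t) (x + x).
Proof.
have := @is_deriveM R R^o id id x 1 1 1 (is_derive_id _ _) (is_derive_id _ _).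
by rewrite /= !scaler1.
Qed.
Lemma dlin (R : realType) (c x : R) : is_derive x (1:R) (fun t : R => t * c) c.
Proof.
have := @is_deriveM R R^o id (cst c) x 1 1 0 (is_derive_id _ _) (is_derive_cst _ _ _).
by rewrite /= scaler0 add0r scaler1.
Qed.
Lemma dH (R : realType) (G : R -> R) (g c0 x : R) : derivable G x 1 ->
  is_derive x (1:R) (fun t => G t + (g / 2 * (t * t) - t * c0))
    (derive1 G x + (g / 2 * (x + x) - c0)).
Proof.
move=> dG.
have h1 : is_derive x (1:R) G (derive1 G x) by rewrite derive1E; exact: derivableP.
have h2 := @is_deriveZ R R^o R^o _ (g/2) x 1 _ (dsq R x).
have h3 := is_deriveB h2 (dlin R c0 x).
exact: (is_deriveD h1 h3).
Qed.
Lemma taylor_lb (R : realType) (G : R -> R) (g : R) :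
  (forall t, derivable G t 1) -> (forall t, derivable (derive1 G) t 1) ->
  (forall t, `|derive1 (derive1 G) t| <= g) ->
  forall a b, 0 <= a -> a <= b ->
  (b - a) * derive1 G 0 - g / 2 * (b ^+ 2 - a ^+ 2) <= G b - G a.
Proof.
move=> dG ddG bd a b a0 ab.
set c0 := derive1 G 0.
pose H := fun t => G t + (g / 2 * (t * t) - t * c0).
have dHx : forall x, derivable H x 1 by move=> x; have [] := dH R G g c0 x (dG x).
have [c cab E] := @MVT_segment R H (fun x => derive1 G x + (g / 2 * (x + x) - c0)) a b ab
  (fun x _ => dH R G g c0 x (dG x))
  (derivable_within_continuous (fun x _ => dHx x)).
have c_ge0 : 0 <= c by move: cab; rewrite in_itv /= => /andP[+ _]; apply: le_trans.
have := @dlb R G g dG ddG bd c c_ge0; rewrite -/c0 => Hc.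
have : 0 <= H b - H a.
  rewrite E mulr_ge0 ?subr_ge0 //.
  have -> : g / 2 * (c + c) = g * c by field.
  lra.
move=> HH.
have -> : G b - G a = H b - H a + ((b - a) * c0 - g / 2 * (b ^+ 2 - a ^+ 2)) by rewrite /H; ring.
lra.
Qed.
Lemma diffs_cvg (R : realType) (c : R^nat) (x z : R) :
  cvgn (pseries c x) -> 4 * `|z| <= `|x| -> x != 0 ->
  cvgn (pseries (pseries_diffs c) z).
Proof.
move=> Cx zx x0.
have [K [Kreal Kf]] := cvg_series_bounded Cx.
pose M : R := `|K| + 1.
have KM : K < M by rewrite /M (le_lt_trans (ler_norm K)) // ltrDl.
have Mb : forall i, `|c i * x ^+ i| <= M by move=> i; exact: (Kf M KM i).
pose X : R := `|x|. have X0 : 0 < X by rewrite normr_gt0.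
apply: normed_cvg.
apply: (@series_le_cvg R _ (geometric (M / X) (2^-1))).
- by move=> n /=.
- move=> n; rewrite /geometric /= mulr_ge0 ?exprn_ge0 ?invr_ge0 //.
  by rewrite divr_ge0 ?(ltW X0) // (le_trans _ (Mb 0%N)).
- move=> k /=; rewrite /pseries_diffs /geometric.
  have Ak := Mb k.+1.
  rewrite !normrM normrX normr_nat.
  have h1 : (k.+1)%:R <= 2 ^+ k :> R.
    by rewrite -natrX ler_nat; exact: ltn_expl.
  have h2 : `|z| ^+ k <= (X / 4) ^+ k.
    rewrite lerXn2r ?nnegrE ?divr_ge0 ?(ltW X0) //. rewrite /X; lra.
  rewrite normrM normrX -/X in Ak.
  set A := `|c k.+1| in Ak *.
  have A0 : 0 <= A by rewrite /A normr_ge0.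
  apply: (@le_trans _ _ (2 ^+ k * A * (X / 4) ^+ k)).
    by rewrite ler_pM // ?mulr_ge0 ?exprn_ge0 // ler_pM.
  have -> : 2 ^+ k * A * (X / 4) ^+ k = A * X ^+ k.+1 / X * 2^-1 ^+ k.
    have -> : X / 4 = X * 2^-1 * 2^-1 by field.
    rewrite !exprMn exprS !exprVn.
    field. by rewrite expf_neq0 // lt0r_neq0.
  by rewrite ler_pM2r ?exprn_gt0 ?invr_gt0 // ler_pM2r ?invr_gt0.
- apply: is_cvg_geometric_series.
  by rewrite ger0_norm ?invr_ge0 // invf_lt1 // ltr1n.
Qed.
Lemma analytic_C2 (R : realType) (G : R -> R) : real_analytic G ->
  forall t, derivable G t 1 /\ derivable (derive1 G) t 1.
Proof.
move=> hG t; have [r [r0 [c hc]]] := hG t.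
pose P0 u := limn (pseries c u).
pose P1 u := limn (pseries (pseries_diffs c) u).
pose P2 u := limn (pseries (pseries_diffs (pseries_diffs c)) u).
have conv0 : forall u, `|u| < r -> pseries c u @ \oo --> G (u + t).
  move=> u hu; have := hc (u + t); rewrite addrK => /(_ hu).
  suff -> : (fun N : nat => \sum_(k < N) c k * u ^+ k) = pseries c u by [].
  by apply/funext => N; rewrite /pseries /series /= big_mkord.
have cv0 u : `|u| < r -> cvgn (pseries c u).
  by move=> hu; apply/cvg_ex; exists (G (u + t)); exact: conv0.
have eq0 u : `|u| < r -> P0 u = G (u + t) by move=> hu; exact/cvg_lim/conv0.
have c1 z : `|z| <= r / 8 -> cvgn (pseries (pseries_diffs c) z).
  move=> hz; apply: (@diffs_cvg R c (r / 2)).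
  - by apply: cv0; rewrite gtr0_norm ?divr_gt0 //; lra.
  - by rewrite [`|r / _|]gtr0_norm ?divr_gt0 //; lra.
  - by rewrite gt_eqF ?divr_gt0.
have c2 z : `|z| <= r / 32 -> cvgn (pseries (pseries_diffs (pseries_diffs c)) z).
  move=> hz; apply: (@diffs_cvg R _ (r / 8)).
  - by apply: c1; rewrite [`|r / _|]gtr0_norm ?divr_gt0 //.
  - by rewrite [`|r / _|]gtr0_norm ?divr_gt0 //; lra.
  - by rewrite gt_eqF ?divr_gt0.
have c3 z : `|z| <= r / 128 ->
    cvgn (pseries (pseries_diffs (pseries_diffs (pseries_diffs c))) z).
  move=> hz; apply: (@diffs_cvg R _ (r / 32)).
  - by apply: c2; rewrite [`|r / _|]gtr0_norm ?divr_gt0 //.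
  - by rewrite [`|r / _|]gtr0_norm ?divr_gt0 //; lra.
  - by rewrite gt_eqF ?divr_gt0.
pose K := r / 128.
have K0 : 0 < K by rewrite divr_gt0.
have nK : `|K| = K by rewrite gtr0_norm.
have D0 (u : R) : `|u| < K -> is_derive u (1:R) P0 (P1 u).
  move=> hu; apply: (@pseries_snd_diffs R c K u).
  - by apply: cv0; rewrite nK /K; lra.
  - by apply: c1; rewrite nK /K; lra.
  - by apply: c2; rewrite nK /K; lra.
  - by rewrite nK.
have D1 (u : R) : `|u| < K -> is_derive u (1:R) P1 (P2 u).
  move=> hu; apply: (@pseries_snd_diffs R (pseries_diffs c) K u).
  - by apply: c1; rewrite nK /K; lra.
  - by apply: c2; rewrite nK /K; lra.
  - by apply: c3; rewrite nK /K; lra.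
  - by rewrite nK.
have nearG (s : R) : `|s - t| < r -> \forall x \near s, (P0 \o shift (- t)) x = G x.
  move=> hs; apply/nbhs_ballP; exists (r - `|s - t|); first by rewrite /= subr_gt0.
  move=> x /=; rewrite -ball_normE /= => hx.
  rewrite eq0 /=; first by rewrite subrK.
  have := ler_normD (x - s) (s - t); rewrite -[x - s + (s - t)]/(x - s + (s - t)).
  rewrite addrA subrK => h; apply: (le_lt_trans h).
  by rewrite distrC in hx; lra.
have DG (s : R) : `|s - t| < K -> is_derive s (1:R) G (P1 (s - t)).
  move=> hs; apply: (near_eq_is_derive (nearG s _)); first by rewrite /K in hs; lra.
  rewrite -[P1 (s - t)]mulr1.
  apply: is_derive1_comp; last exact: is_derive_shift.
  exact: D0.
split.
  have DGt := DG t; rewrite subrr normr0 in DGt.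
  by have [] := DGt K0.
have nearG1 : \forall x \near t, (P1 \o shift (- t)) x = derive1 G x.
  apply/nbhs_ballP; exists K => //= x; rewrite -ball_normE /= => hx.
  have hx' : `|x - t| < K by rewrite distrC.
  by have := DG x hx'; rewrite derive1E => /(@derive_val _ _ _ _ _ _ _) ->.
have : is_derive t (1:R) (P1 \o shift (- t)) (P2 (t - t) * 1).
  apply: is_derive1_comp; last exact: is_derive_shift.
  by apply: D1; rewrite /= addrN normr0.
by move/(near_eq_is_derive nearG1) => [].
Qed.
Lemma sqnorm2Z (R : realType) d (k : R) (v : 'rV[R]_d) :
  sqnorm2 (k *: v) = k ^+ 2 * sqnorm2 v.
Proof.
rewrite /sqnorm2 mulr_sumr; apply: eq_bigr => i _.
by rewrite mxE exprMn.
Qed.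

Lemma sqnorm2_ge0 (R : realType) d (v : 'rV[R]_d) : 0 <= sqnorm2 v.
Proof. by rewrite /sqnorm2 sumr_ge0 // => i _; rewrite sqr_ge0. Qed.

Lemma sqnorm2_eq0 (R : realType) d (v : 'rV[R]_d) : sqnorm2 v = 0 -> v = 0.
Proof.
move=> h; apply/rowP => i; rewrite mxE.
have := @psumr_eq0P _ _ xpredT (fun i => v ord0 i ^+ 2) (fun i _ => sqr_ge0 _) h i isT.
by move/eqP; rewrite sqrf_eq0 => /eqP.
Qed.

Lemma derive1_line (R : realType) d (Fj : 'rV[R]_d -> R) (y p : 'rV[R]_d) :
  differentiable Fj y -> derive1 (fun a : R => Fj (y + a *: p)) 0 = 'd Fj y p.
Proof.
move=> dF; rewrite -deriveE //.
rewrite /derive1 /derive /=.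
suff -> : (fun h : R => h^-1 *: (Fj (y + (h + 0) *: p) - Fj (y + 0 *: p))) =
  (fun h : R => h^-1 *: (Fj (h *: p + y) - Fj y)) by [].
by apply/funext => h; rewrite addr0 scale0r addr0 [y + _]addrC.
Qed.
Lemma pieceA (R : realType) d (Fj : 'rV[R]_d -> R) (gamma : R) :
  (forall x, differentiable Fj x) ->
  (forall x p, real_analytic (fun a : R => Fj (x + a *: p))) ->
  (forall x p, sqnorm2 p = 1 -> forall a : R,
      `| derive1 (derive1 (fun a : R => Fj (x + a *: p))) a | <= gamma) ->
  forall (y v : 'rV[R]_d) (a b : R), 0 <= a -> a <= b ->
   (b - a) * 'd Fj y v - gamma / 2 * sqnorm2 v * (b ^+ 2 - a ^+ 2)
     <= Fj (y + b *: v) - Fj (y + a *: v).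
Proof.
move=> hdiff hanal hcurv y v a b a0 ab.
have [v0|v0] := eqVneq (sqnorm2 v) 0.
  rewrite v0 (sqnorm2_eq0 _ _ _ v0) !scaler0 linear0 subrr; lra.
pose s := Num.sqrt (sqnorm2 v).
have s0 : 0 < s by rewrite sqrtr_gt0 lt_def v0 sqnorm2_ge0.
have s2 : s ^+ 2 = sqnorm2 v by rewrite sqr_sqrtr // sqnorm2_ge0.
pose p := s^-1 *: v.
have vp : v = s *: p by rewrite /p scalerA divff ?scale1r // gt_eqF.
have p1 : sqnorm2 p = 1 by rewrite /p sqnorm2Z -s2 exprVn mulVf // expf_neq0 // gt_eqF.
pose G := fun t : R => Fj (y + t *: p).
have [dG ddG] : (forall t, derivable G t 1) /\ (forall t, derivable (derive1 G) t 1).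
  by split => t; have [] := @analytic_C2 R G (hanal y p) t.
have := @taylor_lb R G gamma dG ddG (hcurv y p p1) (a * s) (b * s).
rewrite mulr_ge0 ?(ltW s0) // ler_pM2r // => /(_ isT ab).
rewrite /G derive1_line // -!scalerA -vp.
have -> : 'd Fj y v = s * 'd Fj y p by rewrite vp linearZ.
rewrite -s2 => h; apply: le_trans h; rewrite le_eqVlt; apply/orP; left; apply/eqP; ring.
Qed.
Lemma bigmin_le_seq (R : realType) (I : eqType) (s : seq I) (F : I -> R) idx x :
  x \in s -> \big[Num.min/idx]_(i <- s) F i <= F x.
Proof.
elim: s => // a s IH; rewrite inE big_cons => /orP[/eqP->|xs].
  by rewrite ge_min lexx.
by rewrite ge_min (IH xs) orbT.
Qed.

Lemma bigmax_ge_seq (R : realType) (I : eqType) (s : seq I) (F : I -> R) idx x :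
  x \in s -> F x <= \big[Num.max/idx]_(i <- s) F i.
Proof.
elim: s => // a s IH; rewrite inE big_cons => /orP[/eqP->|xs].
  by rewrite le_max lexx.
by rewrite le_max (IH xs) orbT.
Qed.

Lemma minI_le (R : realType) n (D : 'I_n -> R) j : minI D <= D j.
Proof. by rewrite /minI; apply: bigmin_le_seq; rewrite mem_index_enum. Qed.

Lemma minI_ge (R : realType) n (D : 'I_n -> R) c : (0 < n)%N ->
  (forall j, c <= D j) -> c <= minI D.
Proof.
move=> n0 hD; rewrite /minI; apply: (@big_ind _ (fun x => c <= x)).
- have : size (enum 'I_n) = n by rewrite size_enum_ord.
  case: (enum 'I_n) => [|j s] /=; first by move=> h; rewrite -h in n0.
  by move=> _; exact: hD.
- by move=> x y hx hy; rewrite le_min hx hy.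
- by move=> j _; exact: hD.
Qed.

Lemma qbar_ge (R : realType) d n (f : 'rV[R]_d -> R) (F : 'I_n -> 'rV[R]_d -> R)
  gamma (xs : nat -> 'rV[R]_d) s z k :
  (k <= s)%N -> qmodel f F gamma (xs k) z <= qbar f F gamma xs s z.
Proof.
move=> ks; rewrite /qbar.
have ks' : (k < s.+1)%N by [].
exact: (@bigmax_ge_seq R _ (index_enum 'I_s.+1)
  (fun k0 : 'I_s.+1 => qmodel f F gamma (xs (val k0)) z)
  (qmodel f F gamma (xs 0%N) z) (Ordinal ks') (mem_index_enum _)).
Qed.

Lemma qbar_le (R : realType) d n (f : 'rV[R]_d -> R) (F : 'I_n -> 'rV[R]_d -> R)
  gamma (xs : nat -> 'rV[R]_d) s z c :
  (forall k, qmodel f F gamma (xs k) z <= c) -> qbar f F gamma xs s z <= c.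
Proof.
move=> h; rewrite /qbar; apply: (@big_ind _ (fun x => x <= c)) => //.
by move=> x y hx hy; rewrite ge_max hx hy.
Qed.
Lemma qmodel_le (R : realType) d n (f : 'rV[R]_d -> R) (F : 'I_n -> 'rV[R]_d -> R)
  (gamma : R)
  (hdiff : forall j x, differentiable (F j) x)
  (hanal : forall j x p, real_analytic (fun a : R => F j (x + a *: p)))
  (hpw : piecewise_of f F)
  (hcurv : forall j x p, sqnorm2 p = 1 -> forall a : R,
      `| derive1 (derive1 (fun a : R => F j (x + a *: p))) a | <= gamma)
  (y z : 'rV[R]_d) : qmodel f F gamma y z <= f z.
Proof.
have [m [t [J [t0 tm tmono tpiece]]]] := hpw y z.
pose v := z - y. pose mu := minI (fun j => 'd (F j) y v).
pose c := gamma / 2 * sqnorm2 v.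
have tpos : forall k, (k <= m)%N -> 0 <= t k.
  elim => [|k IH] hk; first by rewrite t0.
  exact: le_trans (IH (ltnW hk)) (tmono k hk).
have key : forall k, (k <= m)%N -> t k * mu - c * t k ^+ 2 <= f (y + t k *: v) - f y.
  elim => [|k IH] hk.
    by rewrite t0 scale0r addr0 subrr le_eqVlt; apply/orP; left; apply/eqP; ring.
  have hk' : (k < m)%N by [].
  have IHk := IH (ltnW hk).
  have pA := @pieceA R d (F (J k)) gamma (hdiff (J k)) (hanal (J k)) (hcurv (J k)) y v
    (t k) (t k.+1) (tpos k (ltnW hk)) (tmono k hk').
  have e1 := tpiece k hk' (t k) ltac:(by rewrite lexx tmono).
  have e2 := tpiece k hk' (t k.+1) ltac:(by rewrite lexx tmono).
  rewrite -/v in e1 e2.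
  have hm : (t k.+1 - t k) * mu <= (t k.+1 - t k) * 'd (F (J k)) y v.
    by rewrite ler_wpM2l ?subr_ge0 ?tmono // minI_le.
  rewrite -e1 -e2 -/c !mulrBl !mulrBr in pA.
  rewrite !mulrBl in hm.
  lra.
have := key m (leqnn m); rewrite tm scale1r mul1r expr1n mulr1.
have -> : y + v = z by rewrite /v addrC subrK.
by rewrite /qmodel -/v -/mu -/c; lra.
Qed.
Lemma coord_le_norm (R : realType) d (v : 'rV[R]_d) i : `|v ord0 i| <= `|v|.
Proof.
rewrite -[`|v|]/(mx_norm v) mx_normrE.
exact: (@bigmax_ge_seq R _ (index_enum _) (fun ij : 'I_1 * 'I_d => `|v ij.1 ij.2|) 0 (ord0, i) (mem_index_enum _)).
Qed.

Lemma sqnorm2_le (R : realType) d (v : 'rV[R]_d) : sqnorm2 v <= d%:R * `|v| ^+ 2.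
Proof.
rewrite /sqnorm2; apply: (@le_trans _ _ (\sum_(i < d) `|v| ^+ 2)); last first.
  by rewrite sumr_const card_ord mulr_natl.
apply: ler_sum => i _.
by rewrite -real_normK ?num_real // lerXn2r ?nnegrE ?normr_ge0 // coord_le_norm.
Qed.

Lemma sqnorm2N (R : realType) d (v : 'rV[R]_d) : sqnorm2 (- v) = sqnorm2 v.
Proof. by rewrite -scaleN1r sqnorm2Z sqrrN expr1n mul1r. Qed.
Lemma cluster_idx (R : realType) d (xs : nat -> 'rV[R]_d) x :
  cluster (xs @ \oo) x -> forall e, 0 < e -> forall N, exists k, (N <= k)%N /\ `|x - xs k| < e.
Proof.
move=> hc e e0 N.
have hA : (xs @ \oo) (xs @` [set k | (N <= k)%N]) by exists N => // k /= hk; exists k.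
have := hc (xs @` [set k | (N <= k)%N]) (ball x e) hA (@nbhsx_ballx R _ x e e0).
case=> _ [[k hk <-] hb]; exists k; split => //.
by move: hb; rewrite -ball_normE.
Qed.
Lemma tri3 (R : realType) d (x u w : 'rV[R]_d) :
  `|x - (u + (u - w))| <= `|x - u| + `|x - u| + `|x - w|.
Proof.
have -> : x - (u + (u - w)) = (x - u) + (x - u) - (x - w).
  by apply/rowP => i; rewrite !mxE; ring.
by apply: le_trans (ler_normB _ _) _; rewrite lerD2r ler_normD.
Qed.

Lemma tri2 (R : realType) d (x u w : 'rV[R]_d) :
  `|w - u| <= `|x - u| + `|x - w|.
Proof.
have -> : w - u = (x - u) - (x - w) by apply/rowP => i; rewrite !mxE; ring.
exact: ler_normB.
Qed.
Theorem theorem5p1 (R : realType) (d n : nat) (hd : (0 < d)%N) (hn : (0 < n)%N)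
  (lo hi : 'rV[R]_d) (hlohi : forall i, lo ord0 i <= hi ord0 i)
  (f : 'rV[R]_d -> R) (F : 'I_n -> 'rV[R]_d -> R) (gamma : R)
  (hdiff : forall j x, differentiable (F j) x)
  (hanal : forall j x p, real_analytic (fun a : R => F j (x + a *: p)))
  (hcont : continuous f)
  (hpw : piecewise_of f F)
  (hgamma : 0 < gamma)
  (hcurv : forall j x p, sqnorm2 p = 1 -> forall a : R,
      `| derive1 (derive1 (fun a : R => F j (x + a *: p))) a | <= gamma)
  (xs : nat -> 'rV[R]_d)
  (hx0 : box lo hi (xs 0%N))
  (hstep : forall s, box lo hi (xs s.+1) /\
      forall z, box lo hi z -> qbar f F gamma xs s (xs s.+1) <= qbar f F gamma xs s z)
  (xstar : 'rV[R]_d) (hcl : cluster (xs @ \oo) xstar) :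
  box lo hi xstar /\ forall z, box lo hi z -> f xstar <= f z.
Proof.
have inbox k : box lo hi (xs k) by case: k => [|k] //; case: (hstep k).
split.
  move=> i; apply/andP; split.
    rewrite leNgt; apply/negP => hlt.
    have [k [_ hk]] := @cluster_idx R d xs xstar hcl (lo ord0 i - xstar ord0 i) ltac:(by rewrite subr_gt0) 0.
    have := @coord_le_norm R d (xstar - xs k) i; rewrite !mxE => hc.
    have /andP[h1 _] := inbox k i.
    have := ler_norm (xs k ord0 i - xstar ord0 i); rewrite distrC => h2.
    lra.
  rewrite leNgt; apply/negP => hlt.
  have [k [_ hk]] := @cluster_idx R d xs xstar hcl (xstar ord0 i - hi ord0 i) ltac:(by rewrite subr_gt0) 0.
  have := @coord_le_norm R d (xstar - xs k) i; rewrite !mxE => hc.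
  have /andP[_ h1] := inbox k i.
  have := ler_norm (xstar ord0 i - xs k ord0 i).
  lra.
move=> z hz.
apply/ler_addgt0Pr => e4 e40.
pose e := e4 / 4.
have e0 : 0 < e by rewrite divr_gt0.
have /cvgrPdist_lt/(_ e e0) hf := hcont xstar.
have hFj : \forall u \near xstar, forall j, `|F j xstar - F j u| < e.
  apply: (@filter_forall _ _ (fun j u => `|F j xstar - F j u| < e) (nbhs xstar) _) => j.
  by have /cvgrPdist_lt/(_ e e0) := differentiable_continuous (hdiff j xstar).
move/nbhs_ballP: hf => [d1 d10 B1].
move/nbhs_ballP: hFj => [d2 d20 B2].
have B1' u : `|xstar - u| < d1 -> `|f xstar - f u| < e.
  by move=> h; apply: B1; rewrite -ball_normE.
have B2' u : `|xstar - u| < d2 -> forall j, `|F j xstar - F j u| < e.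
  by move=> h; apply: B2; rewrite -ball_normE.
pose dl := Num.min (Num.min d1 (d2 / 3)) (Num.min 1 (e / (4 * gamma * d%:R))).
have dpos : 0 < 4 * gamma * d%:R by rewrite !mulr_gt0 // ltr0n.
have dl0 : 0 < dl by rewrite !lt_min d10 divr_gt0 // ltr01 divr_gt0.
have dl1 : dl <= d1 by rewrite /dl !ge_min lexx.
have dl2 : dl <= d2 / 3 by rewrite /dl !ge_min lexx ?orbT.
have dl3 : dl <= 1 by rewrite /dl !ge_min lexx ?orbT.
have dl4 : dl <= e / (4 * gamma * d%:R) by rewrite /dl !ge_min lexx ?orbT.
have [k [_ hk]] := @cluster_idx R d xs xstar hcl dl dl0 0.
have [m [hkm hm]] := @cluster_idx R d xs xstar hcl dl dl0 k.+1.
pose u := xs k. pose w := xs m.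
have hq : qmodel f F gamma u w <= f z.
  case: m hkm hm @w => [//|s] hks hm w.
  apply: le_trans (@qbar_ge R d n f F gamma xs s (xs s.+1) k hks) _.
  apply: le_trans ((hstep s).2 z hz) _.
  apply: qbar_le => k'.
  exact: qmodel_le.
have hsq : gamma * sqnorm2 (w - u) <= e.
  have nw := @tri2 R d xstar u w.
  have nw2 : `|w - u| <= 2 * dl by rewrite -/u -/w in hk hm; lra.
  have sq1 := @sqnorm2_le R d (w - u).
  have nn : 0 <= `|w - u| by [].
  have sq2 : `|w - u| ^+ 2 <= 4 * dl by nra.
  have h4 : dl * (4 * gamma * d%:R) <= e by rewrite -ler_pdivlMr.
  have dn : 0 < d%:R :> R by rewrite ltr0n.
  nra.
have hmin : - (2 * e) - gamma / 2 * sqnorm2 (w - u)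
    <= minI (fun j => 'd (F j) u (w - u)).
  apply: (@minI_ge R n _ _ hn) => j.
  have pA := @pieceA R d (F j) gamma (hdiff j) (hanal j) (hcurv j) u (u - w) 0 1 (lexx 0) ler01.
  rewrite subr0 mul1r expr1n expr0n /= subr0 mulr1 scale1r scale0r addr0 in pA.
  have eD : 'd (F j) u (u - w) = - 'd (F j) u (w - u) by rewrite -linearN opprB.
  have eS : sqnorm2 (u - w) = sqnorm2 (w - u) by rewrite -(@sqnorm2N R d) opprB.
  rewrite eD eS in pA.
  have hu : `|xstar - u| < d2 by rewrite -/u in hk; lra.
  have hv : `|xstar - (u + (u - w))| < d2.
    have := @tri3 R d xstar u w; rewrite -/u -/w in hk hm; lra.
  have := B2' _ hu j; rewrite ltr_norml => /andP[a1 a2].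
  have := B2' _ hv j; rewrite ltr_norml => /andP[b1 b2].
  lra.
have hfu : f xstar - e <= f u.
  have hu : `|xstar - u| < d1 by rewrite -/u in hk; lra.
  by have := B1' _ hu; rewrite ltr_norml => /andP[a1 a2]; lra.
rewrite /qmodel in hq.
have : e4 = 4 * e by rewrite /e; field.
lra.
Qed.
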